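(* Let $\alpha,\gamma,\mu,\delta,\rho>0$ and consider, for a parameter $b>0$, the system \[ \dot P=P\big[(b-\mu)-2bP+(\delta-b)A\big],\qquad \dot A=-(2\delta P+\rho)A \] on $\mathcal F=\{(P,A): P\ge0,\ A\ge0,\ 2P+A\le1\}$, with centrist share $C=1-2P-A$. Suppose that before time $t_0$ the parameter is $b=\beta_0$ with $\beta_0<\mu$, and let $(P(t_0^-),A(t_0^-))\in\mathcal F$ be the state at $t_0$. A structural shock $(\Delta,\Delta\beta)$ with $\Delta\in[0,1]$ at $t_0$ sets $P(t_0^+)=P(t_0^-)$, $C(t_0^+)=(1-\Delta)C(t_0^-)$, $A(t_0^+)=A(t_0^-)+\Delta C(t_0^-)$, and for $t>t_0$ the system evolves with parameter $b=\beta':=\beta_0+\Delta\beta>0$. If $P(t_0^-)>0$, then $\lim_{t\to\infty}C(t)<1$ (a permanent shift of the long-run equilibrium) if and only if $\beta_0+\Delta\beta>\mu$; in that case \[ \lim_{t\to\infty}C(t)=C^\infty=\frac{\mu}{\beta_0+\Delta\beta}<1, \] which does not depend on $\Delta$ (and if $\beta_0+\Delta\beta\le\mu$ then $C(t)\to1$). If $P(t_0^-)=0$, then $P(t)\equiv0$ for all $t>t_0$ regardless of $\Delta\beta$, and $(P(t),A(t))\to(0,0)$.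
   Context: This is the symmetric reduction ($L=R=P$) of a four-group voter model (left-radical, right-radical, centrist, disengaged) with $b=\alpha+\gamma$ the combined recruitment/reactive-polarisation rate, $\mu$ deradicalisation rate, $\delta$ mobilisation rate of disengaged voters, $\rho$ re-engagement rate. *)

(* Defs.v *)
From Stdlib Require Import Reals.
From Coquelicot Require Import Coquelicot.
Open Scope R_scope.

Definition in_F (P A : R) : Prop := 0 <= P /\ 0 <= A /\ 2 * P + A <= 1.

Definition centrist (P A : R) : R := 1 - 2 * P - A.

Definition fP (b mu delta : R) (P A : R) : R :=
  P * ((b - mu) - 2 * b * P + (delta - b) * A).
Definition fA (delta rho : R) (P A : R) : R :=
  - (2 * delta * P + rho) * A.

Definition post_shock_solution (b mu delta rho t0 P1 A1 : R) (P A : R -> R) : Prop :=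
  P t0 = P1 /\ A t0 = A1 /\
  filterlim P (at_right t0) (locally P1) /\
  filterlim A (at_right t0) (locally A1) /\
  (forall t, t0 < t -> is_derive P t (fP b mu delta (P t) (A t))) /\
  (forall t, t0 < t -> is_derive A t (fA delta rho (P t) (A t))).

(* Main.v *)
Require Import Defs.
From Stdlib Require Import Reals Lra Psatz.
From Coquelicot Require Import Coquelicot.
Open Scope R_scope.

Ltac req := match goal with |- @eq _ ?a ?b => change (@eq R a b) end; ring.

Lemma D_ext (f : R -> R) x l l' : is_derive f x l -> l = l' -> is_derive f x l'.
Proof. intros H ->; exact H. Qed.

Lemma D_mult (f g : R -> R) x a b : is_derive f x a -> is_derive g x b ->
  is_derive (fun t => f t * g t) x (a * g x + f x * b).
Proof. intros Ha Hb. exact (is_derive_mult f g x a b Ha Hb Rmult_comm). Qed.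

Lemma D_plus (f g : R -> R) x a b : is_derive f x a -> is_derive g x b ->
  is_derive (fun t => f t + g t) x (a + b).
Proof. intros Ha Hb. exact (is_derive_plus f g x a b Ha Hb). Qed.

Lemma D_minus (f g : R -> R) x a b : is_derive f x a -> is_derive g x b ->
  is_derive (fun t => f t - g t) x (a - b).
Proof. intros Ha Hb. exact (is_derive_minus f g x a b Ha Hb). Qed.

Lemma D_opp (f : R -> R) x a : is_derive f x a -> is_derive (fun t => - f t) x (- a).
Proof. intros H. exact (is_derive_opp f x a H). Qed.

Lemma D_const (c x : R) : is_derive (fun _ => c) x 0.
Proof. exact (is_derive_const c x). Qed.

Lemma D_explin (k x : R) : is_derive (fun t => exp (k * t)) x (k * exp (k * x)).
Proof.
  apply (is_derive_comp exp (fun t => k * t) x (exp (k*x)) k).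
  - apply is_derive_exp.
  - apply D_ext with (k * 1). apply is_derive_scal. apply (is_derive_id x). exact (Rmult_1_r k).
Qed.

Lemma D_expf (g : R -> R) x a : is_derive g x a -> is_derive (fun t => exp (g t)) x (a * exp (g x)).
Proof.
  intros H. apply (is_derive_comp exp g x (exp (g x)) a). apply is_derive_exp. exact H.
Qed.

Lemma D_cont (f : R -> R) x l : is_derive f x l -> continuity_pt f x.
Proof.
  intros H. apply continuity_pt_filterlim. apply (ex_derive_continuous f x). exists l; exact H.
Qed.

Lemma D_contc (f : R -> R) x l : is_derive f x l -> continuous f x.
Proof.
  intros H. apply (ex_derive_continuous f x). exists l; exact H.
Qed.

Lemma mono_nonincr (f df : R -> R) a :
  (forall t, a < t -> is_derive f t (df t)) -> (forall t, a < t -> df t <= 0) ->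
  forall s t, a < s -> s <= t -> f t <= f s.
Proof.
  intros Hd Hn s t Hs Hst.
  destruct (MVT_gen f s t df) as [c [Hc Heq]].
  - intros x Hx. apply Hd. rewrite Rmin_left in Hx by lra. lra.
  - intros x Hx. apply D_cont with (df x). apply Hd. rewrite Rmin_left in Hx by lra. lra.
  - rewrite Rmin_left in Hc by lra. rewrite Rmax_right in Hc by lra.
    assert (df c <= 0) by (apply Hn; lra).
    assert (df c * (t - s) <= 0). { apply Rmult_le_0_r; lra. } lra.
Qed.

Lemma const_deriv0 (f : R -> R) a :
  (forall t, a < t -> is_derive f t 0) -> forall s t, a < s -> a < t -> f t = f s.
Proof.
  intros Hd s t Hs Ht.
  assert (H1 : forall s t, a < s -> s <= t -> f t <= f s).
  { apply (mono_nonincr f (fun _ => 0) a). exact Hd. intros; lra. }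
  assert (H2 : forall s t, a < s -> s <= t -> - f t <= - f s).
  { apply (mono_nonincr (fun x => - f x) (fun _ => 0) a).
    intros x Hx. apply D_ext with (- 0). apply D_opp. apply Hd; exact Hx. req. intros; lra. }
  destruct (Rle_dec s t).
  - specialize (H1 s t Hs r); specialize (H2 s t Hs r); lra.
  - specialize (H1 t s Ht ltac:(lra)); specialize (H2 t s Ht ltac:(lra)); lra.
Qed.

Lemma decay (w dw : R -> R) (T k m : R) :
  0 < k ->
  (forall t, T < t -> is_derive w t (dw t)) ->
  (forall t, T < t -> dw t <= - k * (w t - m)) ->
  forall d, 0 < d -> exists T', forall t, T' < t -> w t < m + d.
Proof.
  intros Hk Hd Hdw d Hdpos.
  set (h := fun t => (w t - m) * exp (k * t)).
  assert (Hh : forall s t, T < s -> s <= t -> h t <= h s).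
  { apply (mono_nonincr h (fun t => (dw t + k * (w t - m)) * exp (k * t)) T).
    - intros t Ht. unfold h. apply D_ext with ((dw t - 0) * exp (k*t) + (w t - m) * (k * exp (k*t))).
      apply (D_mult (fun t => w t - m) (fun t => exp (k*t))).
      apply (D_minus w (fun _ => m)). apply Hd; exact Ht. apply D_const. apply D_explin. req.
    - intros t Ht. specialize (Hdw t Ht). assert (0 < exp (k*t)) by apply exp_pos.
      apply Rmult_le_0_r; lra. }
  set (s0 := T + 1).
  set (D := Rmax 0 (h s0)).
  exists (Rmax s0 (D / (d * k))). intros t Ht.
  assert (Hts : s0 < t) by (eapply Rle_lt_trans; [apply Rmax_l|exact Ht]).
  assert (HtD : D / (d*k) < t) by (eapply Rle_lt_trans; [apply Rmax_r|exact Ht]).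
  assert (Hle : h t <= D) by (apply Rle_trans with (h s0); [apply Hh; unfold s0 in *; lra| apply Rmax_r]).
  assert (HD0 : 0 <= D) by apply Rmax_l.
  assert (Hs0 : 0 < s0 - T) by (unfold s0; lra).
  assert (He : 1 + k * t <= exp (k * t)).
  { destruct (Req_dec (k*t) 0) as [E|E]. rewrite E, exp_0; lra.
    left. apply exp_ineq1. exact E. }
  unfold h in Hle.
  assert (Hep : 0 < exp (k*t)) by apply exp_pos.
  assert (HkD : D < d * k * t).
  { apply Rmult_lt_compat_l with (r := d*k) in HtD; [|apply Rmult_lt_0_compat; lra].
    unfold Rdiv in HtD. replace (d*k*(D*/(d*k))) with D in HtD by (field; lra). lra. }
  (* (w t - m) * e <= D < d*k*t <= d*(e - 1) < d * e *)
  assert (Hkt : d * k * t <= d * exp (k*t)).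
  { assert (d * (k*t) <= d * exp (k*t)) by (apply Rmult_le_compat_l; lra). nra. }
  assert ((w t - m) * exp (k*t) < d * exp (k*t)) by lra.
  apply Rmult_lt_reg_r in H; lra.
Qed.

Lemma ball_R (x e y : R) : ball x e y -> Rabs (y - x) < e.
Proof. intros H. exact H. Qed.

Lemma RInt_deriv (g : R -> R) t0 s : t0 < s -> (forall t, t0 < t -> continuous g t) ->
  forall t, t0 < t -> is_derive (fun u => RInt g s u) t (g t).
Proof.
  intros Hs Hc t Ht.
  apply (is_derive_RInt g (fun u => RInt g s u) s t).
  - assert (He : 0 < t - t0) by lra.
    exists (mkposreal _ He). intros b Hb. apply ball_R in Hb. simpl in Hb.
    apply (RInt_correct (V:=R_CompleteNormedModule) g s b). apply (ex_RInt_continuous (V:=R_CompleteNormedModule)). intros z Hz. apply Hc.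
    apply Rabs_def2 in Hb.
    assert (t0 < Rmin s b) by (apply Rmin_glb_lt; lra). lra.
  - apply Hc; exact Ht.
Qed.

Lemma rep (y g : R -> R) t0 s : t0 < s ->
  (forall t, t0 < t -> is_derive y t (y t * g t)) ->
  (forall t, t0 < t -> continuous g t) ->
  exists K, forall t, t0 < t -> y t = K * exp (RInt g s t).
Proof.
  intros Hs Hy Hc.
  pose proof (RInt_deriv g t0 s Hs Hc) as HG.
  set (h := fun t => y t * exp (- RInt g s t)).
  assert (Hh : forall t, t0 < t -> is_derive h t 0).
  { intros t Ht. unfold h.
    apply D_ext with (y t * g t * exp (- RInt g s t) + y t * ((- g t) * exp (- RInt g s t))).
    apply (D_mult y (fun u => exp (- RInt g s u))). apply Hy; exact Ht.
    apply (D_expf (fun u => - RInt g s u)). apply (D_opp (fun u => RInt g s u)). apply HG; exact Ht.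
    req. }
  exists (h s). intros t Ht.
  rewrite <- (const_deriv0 h t0 Hh s t Hs Ht). unfold h.
  rewrite Rmult_assoc, <- exp_plus. replace (- RInt g s t + RInt g s t) with 0 by ring.
  rewrite exp_0; ring.
Qed.

Ltac feq := match goal with |- @eq _ ?a ?b => change (@eq R a b) end; field.

Lemma lim_eps (f : R -> R) (l : R) :
  (forall e, 0 < e -> exists T, forall t, T < t -> Rabs (f t - l) < e) -> is_lim f p_infty l.
Proof.
  intros H. apply is_lim_spec. intros eps. destruct (H eps (cond_pos eps)) as [T HT].
  exists T. exact HT.
Qed.

Lemma at_right_ev (f : R -> R) t0 l e : 0 < e -> filterlim f (at_right t0) (locally l) ->
  exists d, 0 < d /\ forall t, t0 < t < t0 + d -> Rabs (f t - l) < e.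
Proof.
  intros He Hf.
  assert (Hl : locally l (fun x => Rabs (x - l) < e)).
  { exists (mkposreal e He). intros y Hy. exact Hy. }
  specialize (Hf _ Hl). destruct Hf as [d Hd].
  exists d. split. apply cond_pos. intros t Ht. apply (Hd t).
  - change (Rabs (t - t0) < d). rewrite Rabs_right; lra.
  - lra.
Qed.

Lemma exp_le (x y : R) : x <= y -> exp x <= exp y.
Proof. intros [H|H]. left; apply exp_increasing; exact H. subst; lra. Qed.

Lemma abs_le_low (x c : R) : Rabs x <= c -> - c <= x.
Proof. intros H. pose proof (Rle_abs (-x)). rewrite Rabs_Ropp in H0. lra. Qed.

Lemma zero_from_right (y g : R -> R) t0 M d : 0 < d ->
  (forall t, t0 < t -> is_derive y t (y t * g t)) ->
  (forall t, t0 < t -> continuous g t) ->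
  (forall t, t0 < t < t0 + d -> Rabs (g t) <= M) ->
  filterlim y (at_right t0) (locally 0) ->
  forall t, t0 < t -> y t = 0.
Proof.
  intros Hd Hy Hc Hb Hl.
  set (s := t0 + d / 2).
  assert (Hs : t0 < s) by (unfold s; lra).
  destruct (rep y g t0 s Hs Hy Hc) as [K HK].
  pose proof (RInt_deriv g t0 s Hs Hc) as HG.
  assert (Hlow : forall t, t0 < t < s -> - (M * d) <= RInt g s t).
  { intros t Ht.
    destruct (MVT_gen (fun u => RInt g s u) t s g) as [c [Hc1 Heq]].
    - intros x Hx. rewrite Rmin_left in Hx by lra. apply HG. lra.
    - intros x Hx. rewrite Rmin_left in Hx by lra. apply D_cont with (g x). apply HG. lra.
    - rewrite Rmin_left in Hc1 by lra. rewrite Rmax_right in Hc1 by lra.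
      rewrite (RInt_point s g) in Heq. change (0 - RInt g s t = g c * (s - t)) in Heq.
      assert (Hgc : Rabs (g c) <= M) by (apply Hb; unfold s in *; lra).
      assert (HM : 0 <= M) by (eapply Rle_trans; [apply Rabs_pos|exact Hgc]).
      assert (g c * (s - t) <= M * d).
      { apply Rle_trans with (Rabs (g c) * (s - t)).
        apply Rmult_le_compat_r. lra. apply Rle_abs.
        apply Rle_trans with (M * (s - t)). apply Rmult_le_compat_r. lra. exact Hgc.
        apply Rmult_le_compat_l. lra. unfold s in *; lra. }
      lra. }
  assert (HK0 : K = 0).
  { destruct (Req_dec K 0) as [E|E]; [exact E|exfalso].
    set (q := Rabs K * exp (- (M * d))).
    assert (Hq : 0 < q) by (apply Rmult_lt_0_compat; [apply Rabs_pos_lt; exact E|apply exp_pos]).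
    destruct (at_right_ev y t0 0 q Hq Hl) as [d3 [Hd3 H3]].
    set (t := t0 + Rmin d3 (d/2) / 2).
    assert (Hm : 0 < Rmin d3 (d/2)) by (apply Rmin_glb_lt; lra).
    assert (Hm1 : Rmin d3 (d/2) <= d3) by apply Rmin_l.
    assert (Hm2 : Rmin d3 (d/2) <= d/2) by apply Rmin_r.
    assert (Ht1 : t0 < t < t0 + d3) by (unfold t; lra).
    assert (Ht2 : t0 < t < s) by (unfold t, s; lra).
    specialize (H3 t Ht1). rewrite Rminus_0_r, (HK t (proj1 Ht1)) in H3.
    rewrite Rabs_mult, (Rabs_pos_eq (exp _)) in H3 by (left; apply exp_pos).
    assert (exp (- (M * d)) <= exp (RInt g s t)) by (apply exp_le; apply Hlow; exact Ht2).
    assert (q <= Rabs K * exp (RInt g s t)) by (apply Rmult_le_compat_l; [apply Rabs_pos|exact H]).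
    lra. }
  intros t Ht. rewrite (HK t Ht), HK0. ring.
Qed.

Lemma pos_from_right (y g : R -> R) t0 l : 0 < l ->
  (forall t, t0 < t -> is_derive y t (y t * g t)) ->
  (forall t, t0 < t -> continuous g t) ->
  filterlim y (at_right t0) (locally l) ->
  forall t, t0 < t -> 0 < y t.
Proof.
  intros Hl0 Hy Hc Hl.
  assert (Hs : t0 < t0 + 1) by lra.
  destruct (rep y g t0 (t0 + 1) Hs Hy Hc) as [K HK].
  destruct (at_right_ev y t0 l l Hl0 Hl) as [d3 [Hd3 H3]].
  set (t1 := t0 + d3 / 2).
  assert (Ht1 : t0 < t1 < t0 + d3) by (unfold t1; lra).
  specialize (H3 t1 Ht1).
  assert (Hy1 : 0 < y t1) by (apply Rabs_def2 in H3; lra).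
  rewrite (HK t1 (proj1 Ht1)) in Hy1.
  assert (HKp : 0 < K).
  { destruct (Rlt_le_dec 0 K) as [h|h]; [exact h|].
    pose proof (exp_pos (RInt g (t0 + 1) t1)). nra. }
  intros t Ht. rewrite (HK t Ht). apply Rmult_lt_0_compat. exact HKp. apply exp_pos.
Qed.

Lemma A_to0 (A P : R -> R) t0 delta rho : 0 < delta -> 0 < rho ->
  (forall t, t0 < t -> 0 <= P t) ->
  (forall t, t0 < t -> is_derive A t (- (2 * delta * P t + rho) * A t)) ->
  forall e, 0 < e -> exists T, forall t, T < t -> Rabs (A t) < e.
Proof.
  intros Hd Hr HP HA e He.
  assert (Hk : 0 < 2 * rho) by lra.
  destruct (decay (fun t => A t * A t)
     (fun t => (- (2 * delta * P t + rho) * A t) * A t + A t * (- (2 * delta * P t + rho) * A t))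
     t0 (2 * rho) 0 Hk) with (d := e * e) as [T HT].
  - intros t Ht. apply (D_mult A A). apply HA; exact Ht. apply HA; exact Ht.
  - intros t Ht. specialize (HP t Ht).
    assert (0 <= A t * A t * (delta * P t)) by (apply Rmult_le_pos; nra).
    nra.
  - nra.
  - exists T. intros t Ht. specialize (HT t Ht).
    destruct (Rle_dec 0 (A t)).
    + rewrite Rabs_right by lra. nra.
    + rewrite Rabs_left by lra. nra.
Qed.

Lemma u_conv_pos (u c : R -> R) T0 b cinf : 0 < b -> 0 < cinf ->
  (forall t, T0 < t -> is_derive u t (2 * b - c t * u t)) ->
  (forall eta, 0 < eta -> exists T, forall t, T < t -> Rabs (c t - cinf) <= eta) ->
  is_lim u p_infty (2 * b / cinf).
Proof.
  intros Hb Hci Hu Hc. apply lim_eps. intros eps Heps.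
  set (us := 2 * b / cinf). set (k := cinf / 2).
  assert (Hus : 0 < us) by (unfold us; apply Rdiv_lt_0_compat; lra).
  assert (Hk : 0 < k) by (unfold k; lra).
  assert (H2b : 2 * b = cinf * us) by (unfold us; field; lra).
  set (eta := Rmin (cinf / 2) (eps * k / (2 * us))).
  assert (Heta : 0 < eta).
  { apply Rmin_glb_lt. lra. apply Rdiv_lt_0_compat; nra. }
  assert (Heta1 : eta <= cinf / 2) by apply Rmin_l.
  assert (Heta2 : eta <= eps * k / (2 * us)) by apply Rmin_r.
  destruct (Hc eta Heta) as [T1 HT1].
  set (m := (eta * us / k) * (eta * us / k)).
  destruct (decay (fun t => (u t - us) * (u t - us))
     (fun t => (2 * b - c t * u t) * (u t - us) + (u t - us) * (2 * b - c t * u t))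
     (Rmax T0 T1) k m Hk) with (d := eps * eps / 2) as [T HT].
  - intros t Ht.
    assert (T0 < t) by (eapply Rle_lt_trans; [apply Rmax_l|exact Ht]).
    apply D_ext with ((2 * b - c t * u t - 0) * (u t - us) + (u t - us) * (2 * b - c t * u t - 0)).
    apply (D_mult (fun t => u t - us) (fun t => u t - us));
      apply (D_minus u (fun _ => us)); try (apply Hu; lra); apply D_const.
    req.
  - intros t Ht.
    assert (T1 < t) by (eapply Rle_lt_trans; [apply Rmax_r|exact Ht]).
    specialize (HT1 t H).
    set (e := u t - us). set (cc := c t).
    assert (Hue : u t = us + e) by (unfold e; ring).
    rewrite Hue. rewrite H2b.
    assert (Hcc : k <= cc) by (apply abs_le_low in HT1; unfold k, cc in *; lra).
    assert (H1 : e * (cinf - cc) <= Rabs e * eta).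
    { apply Rle_trans with (Rabs (e * (cinf - cc))). apply Rle_abs.
      rewrite Rabs_mult. apply Rmult_le_compat_l. apply Rabs_pos.
      rewrite Rabs_minus_sym. exact HT1. }
    assert (H2 : 2 * Rabs e * us * eta <= k * (e * e) + us * us * eta * eta / k).
    { assert (0 <= (k * Rabs e - us * eta) * (k * Rabs e - us * eta)) by (pose proof (Rle_0_sqr (k * Rabs e - us * eta)) as Hsq; unfold Rsqr in Hsq; lra).
      assert (Rabs e * Rabs e = e * e) by (destruct (Rle_dec 0 e); [rewrite Rabs_right by lra | rewrite Rabs_left by lra]; ring).
      apply Rmult_le_reg_l with k. exact Hk.
      replace (k * (k * (e * e) + us * us * eta * eta / k)) with (k * k * (e * e) + us * us * eta * eta) by (field; lra).
      nra. }
    assert (H3 : - 2 * cc * (e * e) <= - 2 * k * (e * e)) by nra.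
    assert (Hm : k * m = us * us * eta * eta / k) by (unfold m; field; lra).
    assert (H4 : 2 * e * us * (cinf - cc) <= 2 * Rabs e * us * eta).
    { assert (0 < 2 * us) by lra. nra. }
    replace ((cinf * us - cc * (us + e)) * (us + e - us) + (us + e - us) * (cinf * us - cc * (us + e)))
      with (2 * e * us * (cinf - cc) - 2 * cc * (e * e)) by ring.
    replace (- k * ((us + e - us) * (us + e - us) - m)) with (- k * (e * e) + k * m) by ring.
    lra.
  - nra.
  - exists T. intros t Ht. specialize (HT t Ht).
    assert (Hm : m <= eps * eps / 4).
    { assert (Hr : eta * us / k <= eps / 2).
      { apply Rmult_le_reg_r with (2 * us / k). apply Rdiv_lt_0_compat; lra.
        replace (eta * us / k * (2 * us / k)) with (eta * (2 * us * us / (k * k))) by (field; lra).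
        apply Rle_trans with (eps * k / (2 * us) * (2 * us * us / (k * k))).
        apply Rmult_le_compat_r. apply Rlt_le, Rdiv_lt_0_compat; nra. exact Heta2.
        right; field; lra. }
      assert (0 <= eta * us / k) by (apply Rlt_le, Rdiv_lt_0_compat; nra).
      unfold m; nra. }
    fold us.
    destruct (Rle_dec 0 (u t - us)).
    + rewrite Rabs_right by lra. nra.
    + rewrite Rabs_left by lra. nra.
Qed.

Lemma u_to_inf (u c : R -> R) T0 b cinf : 0 < b -> cinf <= 0 ->
  (forall t, T0 < t -> 0 < u t) ->
  (forall t, T0 < t -> is_derive u t (2 * b - c t * u t)) ->
  (forall eta, 0 < eta -> exists T, forall t, T < t -> Rabs (c t - cinf) <= eta) ->
  forall M, 0 < M -> exists T, forall t, T < t -> M < u t.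
Proof.
  intros Hb Hci Hpos Hu Hc M HM.
  set (eta := 2 * b / (M + 1)).
  assert (Heta : 0 < eta) by (unfold eta; apply Rdiv_lt_0_compat; lra).
  destruct (Hc eta Heta) as [T1 HT1].
  assert (He2 : eta * (2 * b / eta) = 2 * b) by (field; lra).
  assert (He3 : 2 * b / eta = M + 1) by (unfold eta; field; lra).
  destruct (decay (fun t => - u t) (fun t => - (2 * b - c t * u t))
     (Rmax T0 T1) eta (- (2 * b / eta)) Heta) with (d := 1) as [T HT].
  - intros t Ht.
    assert (T0 < t) by (eapply Rle_lt_trans; [apply Rmax_l|exact Ht]).
    apply (D_opp u). apply Hu; lra.
  - intros t Ht.
    assert (T0 < t) by (eapply Rle_lt_trans; [apply Rmax_l|exact Ht]).
    assert (T1 < t) by (eapply Rle_lt_trans; [apply Rmax_r|exact Ht]).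
    specialize (HT1 t H0). specialize (Hpos t H).
    assert (c t <= eta) by (pose proof (Rle_abs (c t - cinf)); lra).
    assert (c t * u t <= eta * u t) by (apply Rmult_le_compat_r; lra).
    replace (- eta * (- u t - - (2 * b / eta))) with (eta * u t - eta * (2 * b / eta)) by ring.
    lra.
  - lra.
  - exists T. intros t Ht. specialize (HT t Ht). lra.
Qed.

Theorem theorem7p1
  (alpha gamma mu delta rho beta0 dbeta Delta t0 Pm Am : R)
  (P A : R -> R) :
  0 < alpha -> 0 < gamma -> 0 < mu -> 0 < delta -> 0 < rho ->
  0 < beta0 -> beta0 < mu ->
  0 < beta0 + dbeta ->
  0 <= Delta <= 1 ->
  in_F Pm Am ->
  post_shock_solution (beta0 + dbeta) mu delta rho t0
    Pm (Am + Delta * centrist Pm Am) P A ->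
  (0 < Pm ->
     exists Cinf : R,
       is_lim (fun t => centrist (P t) (A t)) p_infty Cinf /\
       (Cinf < 1 <-> mu < beta0 + dbeta) /\
       (mu < beta0 + dbeta -> Cinf = mu / (beta0 + dbeta)) /\
       (beta0 + dbeta <= mu -> Cinf = 1)) /\
  (Pm = 0 ->
     (forall t, t0 < t -> P t = 0) /\
     is_lim P p_infty 0 /\ is_lim A p_infty 0).
Proof.
  intros Ha Hg Hmu Hdel Hrho Hb0 Hb0mu Hb HDel HF Hsol.
  set (b := beta0 + dbeta) in *.
  set (A1 := Am + Delta * centrist Pm Am) in *.
  destruct Hsol as (HP0 & HA0 & HlimP & HlimA & HdP & HdA).
  unfold fP, fA in HdP, HdA.
  set (gP := fun t => (b - mu) - 2 * b * P t + (delta - b) * A t).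
  set (gA := fun t => - (2 * delta * P t + rho)).
  assert (HdP' : forall t, t0 < t -> is_derive P t (P t * gP t)) by (intros t Ht; exact (HdP t Ht)).
  assert (HdA' : forall t, t0 < t -> is_derive A t (A t * gA t)).
  { intros t Ht. apply D_ext with (- (2 * delta * P t + rho) * A t). apply HdA; exact Ht.
    unfold gA; req. }
  assert (HcgP : forall t, t0 < t -> continuous gP t).
  { intros t Ht. unfold gP.
    apply (D_contc _ t ((0 - 2 * b * (P t * gP t)) + (delta - b) * (- (2 * delta * P t + rho) * A t))).
    apply (D_plus (fun t => (b - mu) - 2 * b * P t) (fun t => (delta - b) * A t)).
    apply (D_minus (fun _ => b - mu) (fun t => 2 * b * P t)). apply D_const.
    apply is_derive_scal. apply HdP'; exact Ht.
    apply is_derive_scal. apply HdA; exact Ht. }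
  assert (HcgA : forall t, t0 < t -> continuous gA t).
  { intros t Ht. unfold gA.
    apply (D_contc _ t (- (2 * delta * (P t * gP t) + 0))).
    apply (D_opp (fun t => 2 * delta * P t + rho)).
    apply (D_plus (fun t => 2 * delta * P t) (fun _ => rho)).
    apply is_derive_scal. apply HdP'; exact Ht. apply D_const. }
  assert (HA0lim : (forall t, t0 < t -> 0 <= P t) -> is_lim A p_infty 0).
  { intros Hnn. apply lim_eps. intros e He.
    destruct (A_to0 A P t0 delta rho Hdel Hrho Hnn HdA e He) as [T HT].
    exists T. intros t Ht. rewrite Rminus_0_r. apply HT; exact Ht. }
  split.
  -
    intros HPm.
    assert (Ppos : forall t, t0 < t -> 0 < P t) by exact (pos_from_right P gP t0 Pm HPm HdP' HcgP HlimP).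
    assert (HAl : is_lim A p_infty 0) by (apply HA0lim; intros t Ht; left; apply Ppos; exact Ht).
    set (u := fun t => / P t).
    set (c := fun t => (b - mu) + (delta - b) * A t).
    set (cinf := b - mu).
    assert (Hu : forall t, t0 < t -> is_derive u t (2 * b - c t * u t)).
    { intros t Ht. specialize (Ppos t Ht).
      apply D_ext with (- (P t * gP t) / P t ^ 2).
      apply is_derive_inv. apply HdP'; exact Ht. lra.
      unfold gP, c, u. feq. lra. }
    assert (Hc : forall eta, 0 < eta -> exists T, forall t, T < t -> Rabs (c t - cinf) <= eta).
    { intros eta Heta.
      assert (Hq : 0 < Rabs (delta - b) + 1) by (pose proof (Rabs_pos (delta - b)); lra).
      destruct (A_to0 A P t0 delta rho Hdel Hrho (fun t Ht => Rlt_le _ _ (Ppos t Ht)) HdA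
                 (eta / (Rabs (delta - b) + 1))) as [T HT].
      { apply Rdiv_lt_0_compat; lra. }
      exists T. intros t Ht. specialize (HT t Ht).
      replace (c t - cinf) with ((delta - b) * A t) by (unfold c, cinf; ring).
      rewrite Rabs_mult.
      apply Rle_trans with (Rabs (delta - b) * (eta / (Rabs (delta - b) + 1))).
      apply Rmult_le_compat_l. apply Rabs_pos. lra.
      apply Rmult_le_reg_r with (Rabs (delta - b) + 1). exact Hq.
      replace (Rabs (delta - b) * (eta / (Rabs (delta - b) + 1)) * (Rabs (delta - b) + 1))
        with (Rabs (delta - b) * eta) by (field; lra).
      pose proof (Rabs_pos (delta - b)). nra. }
    assert (Hpinf : exists pinf : R, is_lim P p_infty pinf /\ (mu < b -> pinf = (b - mu) / (2 * b))
                                  /\ (b <= mu -> pinf = 0)).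
    { destruct (Rlt_le_dec mu b) as [Hlt|Hle].
      - assert (Hci : 0 < cinf) by (unfold cinf; lra).
        pose proof (u_conv_pos u c t0 b cinf Hb Hci Hu Hc) as Hul.
        exists (/ (2 * b / cinf)). split; [|split].
        + apply (is_lim_ext_loc (fun y => / u y)).
          { exists t0. intros t Ht. unfold u. apply Rinv_inv. }
          apply (is_lim_inv u p_infty (2 * b / cinf)) in Hul.
          exact Hul.
          intros E. injection E. intros E'. 
          assert (0 < 2 * b / cinf) by (apply Rdiv_lt_0_compat; lra). lra.
        + intros _. unfold cinf. field. lra.
        + intros; lra.
      - assert (Hci : cinf <= 0) by (unfold cinf; lra).
        exists 0. split; [|split; intros; lra].
        apply lim_eps. intros e He.
        assert (Hupos : forall t, t0 < t -> 0 < u t) by (intros t Ht; unfold u; apply Rinv_0_lt_compat, Ppos, Ht).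
        destruct (u_to_inf u c t0 b cinf Hb Hci Hupos Hu Hc (/ e)) as [T HT].
        { apply Rinv_0_lt_compat; exact He. }
        exists (Rmax t0 T). intros t Ht.
        assert (t0 < t) by (eapply Rle_lt_trans; [apply Rmax_l|exact Ht]).
        assert (T < t) by (eapply Rle_lt_trans; [apply Rmax_r|exact Ht]).
        specialize (HT t H0). specialize (Ppos t H).
        unfold u in HT.
        rewrite Rminus_0_r, Rabs_right by lra.
        assert (P t * / P t = 1) by (field; lra).
        assert (P t * / e < 1).
        { rewrite <- H1. apply Rmult_lt_compat_l; lra. }
        apply Rmult_lt_compat_r with (r := e) in H2; [|exact He].
        replace (P t * / e * e) with (P t) in H2 by (field; lra). lra. }
    destruct Hpinf as [pinf [Hpl [Hp1 Hp2]]].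
    exists (1 - 2 * pinf - 0). split; [|split; [|split]].
    + unfold centrist.
      apply (is_lim_minus' (fun t => 1 - 2 * P t) A).
      apply (is_lim_minus' (fun _ => 1) (fun t => 2 * P t)). apply is_lim_const.
      apply (is_lim_scal_l P 2 p_infty pinf). exact Hpl. exact HAl.
    + split.
      * intros H. destruct (Rlt_le_dec mu b) as [h|h]; [exact h|].
        rewrite (Hp2 h) in H. lra.
      * intros h. rewrite (Hp1 h).
        assert (0 < (b - mu) / (2 * b)) by (apply Rdiv_lt_0_compat; lra). lra.
    + intros h. rewrite (Hp1 h). field. lra.
    + intros h. rewrite (Hp2 h). ring.
  - intros HPm0.
    assert (HPz : forall t, t0 < t -> P t = 0).
    { destruct (at_right_ev P t0 Pm 1 Rlt_0_1 HlimP) as [d1 [Hd1 H1]].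
      destruct (at_right_ev A t0 A1 1 Rlt_0_1 HlimA) as [d2 [Hd2 H2]].
      set (d := Rmin d1 d2).
      assert (Hd : 0 < d) by (apply Rmin_glb_lt; lra).
      set (M := Rabs (b - mu) + 2 * b * 1 + Rabs (delta - b) * (Rabs A1 + 1)).
      apply (zero_from_right P gP t0 M d Hd HdP' HcgP).
      + intros t Ht.
        assert (Hdd1 : d <= d1) by apply Rmin_l.
        assert (Hdd2 : d <= d2) by apply Rmin_r.
        specialize (H1 t ltac:(lra)). specialize (H2 t ltac:(lra)).
        rewrite HPm0, Rminus_0_r in H1.
        assert (HA : Rabs (A t) <= Rabs A1 + 1).
        { replace (A t) with ((A t - A1) + A1) by ring.
          eapply Rle_trans. apply Rabs_triang. lra. }
        unfold gP, M.
        eapply Rle_trans. apply Rabs_triang.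
        apply Rplus_le_compat.
        * unfold Rminus at 2. eapply Rle_trans. apply Rabs_triang.
          rewrite Rabs_Ropp. apply Rplus_le_compat_l.
          rewrite Rabs_mult, (Rabs_pos_eq (2 * b)) by lra.
          apply Rmult_le_compat_l; lra.
        * rewrite Rabs_mult. apply Rmult_le_compat_l. apply Rabs_pos. exact HA.
      + rewrite <- HPm0. exact HlimP. }
    split; [exact HPz|split].
    + apply lim_eps. intros e He. exists t0. intros t Ht. rewrite HPz by exact Ht.
      rewrite Rminus_0_r, Rabs_R0. exact He.
    + apply HA0lim. intros t Ht. rewrite HPz by exact Ht. lra.
Qed.
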